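(* Let the parent function on $Q_1\setminus\{o\}$ be defined by the rule below, and for $p\in Q_1$ let $R(p)$ be the set consisting of $p$, its parent, the parent of its parent, and so on until $o$ is reached. Then for every $p\in Q_1$, $R(p)$ has error less than $1.5$ in the $L_\infty$ metric, i.e. every $v\in R(p)$ has $L_\infty$ distance less than $1.5$ from the Euclidean segment $\overline{op}$. Parent rule, applied to each $p\in Q_1\setminus\{o\}$ (first applicable case): (1) if $p_x\le 1$ and $p\neq(1,0)$, the parent is $p^\downarrow$; (2) else if $p_y\le 1$, the parent is $p^\leftarrow$; (3) else if $p_y=2$ and $D(p)$ is a power of $2$, the parent is $p^\downarrow$; (4) else if $D(p)-1$ is a power of $2$, the parent is whichever of $p^\downarrow,p^\leftarrow$ has odd $x$-coordinate; (5) otherwise, let $Z_i^j$ be the zone containing $p$, and the parent is whichever of $p^\downarrow,p^\leftarrow$ is closer to the point $\mathrm{Mid}(i,j,D(p)-1)$, ties broken arbitrarily.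
   Context: Let $o=(0,0)$ and $Q_1=\{p\in\mathbb{Z}^2: p_x\ge0,p_y\ge0\}$. For $p\in\mathbb{Z}^2$ let $D(p)=p_x+p_y$ (the diagonal of $p$), $p^\leftarrow=(p_x-1,p_y)$, $p^\downarrow=(p_x,p_y-1)$. For a point $q\ne o$ in the closed first quadrant let $M(q)=q_y/q_x$ if $q_x>0$ and $M(q)=\infty$ otherwise, and let $\ell(q)$ be the Euclidean line through $o$ and $q$. A point $r$ is ''below $\ell(q)$'' if $M(r)\le M(q)$ and ''above $\ell(q)$'' if $M(r)>M(q)$. For integers $i\ge2$ and $1\le j\le 2^i-1$ let $v_i^j=(j,2^i-j)$. For $1\le j\le 2^i-2$, the zone $Z_i^j$ is the set of all $r\in\mathbb{R}^2$ in the first quadrant with $2^i<r_x+r_y\le 2^{i+1}$, $r$ below $\ell(v_i^j)$ and $r$ above $\ell(v_i^{j+1})$. For a real $d$ with $2^i<d<2^{i+1}$, $\mathrm{Mid}(i,j,d)$ is the point on the line $x+y=d$ whose $L_\infty$ distances to $\ell(v_i^j)$ and $\ell(v_i^{j+1})$ are equal (the midpoint of the two intersection points of these lines with $x+y=d$). ''Closer'' in case (5) refers to $L_\infty$ distance. (Every point reaching case (5) lies in exactly one zone.) *)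

(* Defs.v *)
From Stdlib Require Import Reals ZArith Lra Lia.
Open Scope R_scope.

Definition pt := (Z * Z)%type.

Definition origin : pt := (0%Z, 0%Z).
Definition inQ1 (p : pt) : Prop := (0 <= fst p)%Z /\ (0 <= snd p)%Z.
Definition Ddiag (p : pt) : Z := (fst p + snd p)%Z.
Definition pleft (p : pt) : pt := (fst p - 1, snd p)%Z.
Definition pdown (p : pt) : pt := (fst p, snd p - 1)%Z.

Definition pow2 (n : Z) : Prop := exists k : nat, n = (2 ^ Z.of_nat k)%Z.

Definition rpt := (R * R)%type.
Definition toR (p : pt) : rpt := (IZR (fst p), IZR (snd p)).

Definition linf (a b : rpt) : R :=
  Rmax (Rabs (fst a - fst b)) (Rabs (snd a - snd b)).

(* r below l(q): M(r) <= M(q), with M(q) = q_y/q_x, or infinity if q_x = 0 *)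
Definition below (r q : rpt) : Prop :=
  if Req_EM_T (fst q) 0 then True
  else (fst r <> 0 /\ snd r / fst r <= snd q / fst q).
Definition above (r q : rpt) : Prop := ~ below r q.

Definition vij (i j : Z) : rpt := (IZR j, IZR (2 ^ i - j)).

Definition in_zone (i j : Z) (r : rpt) : Prop :=
  0 <= fst r /\ 0 <= snd r /\
  IZR (2 ^ i) < fst r + snd r <= IZR (2 ^ (i + 1)) /\
  below r (vij i j) /\ above r (vij i (j + 1)).

Definition inter (v : rpt) (d : R) : rpt :=
  (d / (fst v + snd v) * fst v, d / (fst v + snd v) * snd v).

Definition Mid (i j : Z) (d : R) : rpt :=
  ((fst (inter (vij i j) d) + fst (inter (vij i (j + 1)) d)) / 2,
   (snd (inter (vij i j) d) + snd (inter (vij i (j + 1)) d)) / 2).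

(* q is an admissible parent of p (p in Q1 \ {o}) according to the rule
   (first applicable case; ties in case (5) broken arbitrarily). *)
Definition case1 (p : pt) : Prop := (fst p <= 1)%Z /\ p <> (1%Z, 0%Z).
Definition case2 (p : pt) : Prop := (snd p <= 1)%Z.
Definition case3 (p : pt) : Prop := snd p = 2%Z /\ pow2 (Ddiag p).
Definition case4 (p : pt) : Prop := pow2 (Ddiag p - 1).

Definition valid_parent (p q : pt) : Prop :=
  (case1 p -> q = pdown p) /\
  (~ case1 p -> case2 p -> q = pleft p) /\
  (~ case1 p -> ~ case2 p -> case3 p -> q = pdown p) /\
  (~ case1 p -> ~ case2 p -> ~ case3 p -> case4 p ->
     (q = pdown p \/ q = pleft p) /\ Z.odd (fst q) = true) /\
  (~ case1 p -> ~ case2 p -> ~ case3 p -> ~ case4 p ->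
     exists i j : Z,
       (2 <= i)%Z /\ (1 <= j <= 2 ^ i - 2)%Z /\ in_zone i j (toR p) /\
       let m := Mid i j (IZR (Ddiag p - 1)) in
       ((q = pdown p /\ linf (toR (pdown p)) m <= linf (toR (pleft p)) m) \/
        (q = pleft p /\ linf (toR (pleft p)) m <= linf (toR (pdown p)) m))).

Definition in_R (par : pt -> pt) (p v : pt) : Prop :=
  exists k : nat, v = Nat.iter k par p /\
    (forall j : nat, (j < k)%nat -> Nat.iter j par p <> origin).

(* L_infinity distance from v to the segment [o,p] is less than c
   (the distance to the compact segment is attained) *)
Definition dist_seg_lt (v p : pt) (c : R) : Prop :=
  exists t : R, 0 <= t <= 1 /\
    linf (toR v) (t * IZR (fst p), t * IZR (snd p)) < c.

(* Main.v *)
Require Import Defs.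
From Stdlib Require Import Reals ZArith.
From Stdlib Require Import Classical.
From Stdlib Require Import Reals ZArith Lra Lia Psatz.
Open Scope Z_scope.

Definition ZI (P n l k x y : Z) : Prop :=
  0 <= l /\ 2^l < x + y <= 2*2^l /\ k*n <= 2^l*P < (k+1)*n /\ 0 <= k <= 2^l - 1 /\
  Z.min (2*2^l*(x+y)*P - (x+y)*n*(2*k+1)) (-(2^l*n)) <= 2*2^l*n*x - (x+y)*n*(2*k+1)
     <= Z.max (2*2^l*(x+y)*P - (x+y)*n*(2*k+1)) (2^l*n) /\
  (x + y = 2*2^l -> y <> 2).

Lemma ZI_bound P n l k x y : 0 < n -> 0 <= P <= n -> 0 <= x -> 0 <= y ->
  ZI P n l k x y -> 2 * Z.abs (n*x - (x+y)*P) < 3*n.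
Proof.
  intros Hn HP Hx Hy (Hl & Hm & Hs & Hk & Hb & _).
  assert (HL : 0 < 2^l) by (apply Z.pow_pos_nonneg; lia).
  set (L := 2^l) in *. set (m := x + y) in *.
  set (d := 2*L*P - n*(2*k+1)).
  assert (Hd : -n <= d < n) by (unfold d; lia).
  assert (HMD : 2*L*m*P - m*n*(2*k+1) = m*d) by (unfold d; ring).
  rewrite HMD in Hb.
  assert (H1 : - (m*n) <= m*d <= m*n) by nia.
  assert (HE : 2*L*n*x - m*n*(2*k+1) - m*d = 2*L*(n*x - m*P)) by (unfold d; ring).
  assert (HLn : 0 < L*n) by nia.
  assert (Hc : -3*(L*n) < 2*L*(n*x - m*P) < 3*(L*n)).
  { destruct (Z.eq_dec m (2*L)) as [Heq|Hne].
    - assert (HB : 2*L*n*x - m*n*(2*k+1) = 2*(L*n)*(x - 2*k-1)) by (rewrite Heq; ring).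
      assert (2*L*n*x - m*n*(2*k+1) <> L*n /\ 2*L*n*x - m*n*(2*k+1) <> -(L*n)).
      { rewrite HB. split; intro C.
        - assert (L*n*(2*(x-2*k-1) - 1) = 0) by lia.
          apply Z.mul_eq_0 in H. lia.
        - assert (L*n*(2*(x-2*k-1) + 1) = 0) by lia.
          apply Z.mul_eq_0 in H. lia. }
      assert (m*n = 2*(L*n)) by (rewrite Heq; ring).
      lia.
    - assert (m*n <= 2*(L*n) - n) by nia. lia. }
  assert (Habs : -3*n < 2*(n*x - m*P) < 3*n) by nia.
  lia.
Qed.
Lemma ZI_zone P n l k x y : 0 < n -> 0 <= P <= n -> 0 <= x -> 0 <= y ->
  ZI P n l k x y -> k*(x+y) <= 2^l*x < (k+1)*(x+y).
Proof.
  intros Hn HP Hx Hy (Hl & Hm & Hs & Hk & Hb & _).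
  assert (HL : 0 < 2^l) by (apply Z.pow_pos_nonneg; lia).
  set (L := 2^l) in *. set (m := x + y) in *.
  set (d := 2*L*P - n*(2*k+1)).
  assert (Hd : -n <= d < n) by (unfold d; lia).
  assert (HMD : 2*L*m*P - m*n*(2*k+1) = m*d) by (unfold d; ring).
  rewrite HMD in Hb.
  assert (H1 : - (m*n) <= m*d < m*n) by nia.
  assert (L*n < m*n) by nia.
  assert (E1 : 2*L*n*x - m*n*(2*k+1) + m*n = 2*n*(L*x - k*m)) by ring.
  assert (E2 : m*n - (2*L*n*x - m*n*(2*k+1)) = 2*n*((k+1)*m - L*x)) by ring.
  split; nia.
Qed.

Lemma ZI_step P n l k x y x' y' : 0 < n -> 0 <= P <= n -> 0 <= x -> 0 <= y ->
  ZI P n l k x y -> 2^l < x + y - 1 ->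
  ((x' = x /\ y' = y - 1 /\ 2*2^l*x - (x+y-1)*(2*k+1) <= 2^l) \/
   (x' = x - 1 /\ y' = y /\ 2*2^l*x - (x+y-1)*(2*k+1) >= 2^l)) ->
  ZI P n l k x' y'.
Proof.
  intros Hn HP Hx Hy (Hl & Hm & Hs & Hk & Hb & H2) Hlt Hc.
  assert (HL : 0 < 2^l) by (apply Z.pow_pos_nonneg; lia).
  set (L := 2^l) in *. set (m := x + y) in *.
  set (d := 2*L*P - n*(2*k+1)).
  assert (Hd : -n <= d < n) by (unfold d; lia).
  assert (HMD : 2*L*m*P - m*n*(2*k+1) = m*d) by (unfold d; ring).
  rewrite HMD in Hb.
  assert (x' + y' = m - 1) by (unfold m; lia).
  unfold ZI. fold L. rewrite H.
  assert (HMD' : 2*L*(m-1)*P - (m-1)*n*(2*k+1) = m*d - d) by (unfold d; ring).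
  rewrite HMD'.
  assert (0 <= L*P <= L*n) by nia.
  assert (n*(2*k+1) <= 2*(L*n)) by nia.
  split; [lia|]. split; [lia|]. split; [lia|]. split; [lia|].
  split; [|lia].
  destruct Hc as [(-> & -> & Hu)|(-> & -> & Hu)].
  - assert (E : 2*L*n*x - (m-1)*n*(2*k+1) = n*(2*L*x - (m-1)*(2*k+1))) by ring.
    assert (E2 : 2*L*n*x - (m-1)*n*(2*k+1) = (2*L*n*x - m*n*(2*k+1)) + n*(2*k+1)) by ring.
    assert (n*(2*L*x - (m-1)*(2*k+1)) <= n*L) by nia.
    unfold d in *. lia.
  - assert (E : 2*L*n*(x-1) - (m-1)*n*(2*k+1) = n*(2*L*x - (m-1)*(2*k+1)) - 2*(L*n)) by ring.
    assert (E2 : 2*L*n*(x-1) - (m-1)*n*(2*k+1) = (2*L*n*x - m*n*(2*k+1)) + n*(2*k+1) - 2*(L*n)) by ring.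
    assert (n*(2*L*x - (m-1)*(2*k+1)) >= n*L) by nia.
    unfold d in *. lia.
Qed.

Lemma ZI_trans P n l k' x' y' : 0 < n -> 0 <= P <= n -> 1 <= l ->
  x' + y' = 2^l -> x' = 2*k'+1 -> 0 <= x' -> 0 <= y' ->
  (x'-1)*n <= 2^l*P < (x'+1)*n -> ZI P n (l-1) k' x' y'.
Proof.
  intros Hn HP Hl Hm Hx Hx0 Hy Hs.
  assert (E : 2^l = 2*2^(l-1)).
  { replace l with (l-1+1) at 1 by lia. rewrite Z.pow_add_r by lia. lia. }
  assert (HL : 0 < 2^(l-1)) by (apply Z.pow_pos_nonneg; lia).
  rewrite E in *. set (L := 2^(l-1)) in *.
  unfold ZI. fold L. rewrite Hm.
  assert (Hz : 2*L*n*x' - 2*L*n*(2*k'+1) = 0) by (rewrite Hx; ring).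
  assert (Hy' : y' = 2*L - x') by lia.
  assert (0 < L*n) by nia.
  clearbody L.
  split; [lia|]. split; [lia|]. split; [subst x'; lia|]. split; [lia|].
  split.
  - lia.
  - intros _. assert (Z.odd y' = true).
    { rewrite Hy', Hx. replace (2*L - (2*k'+1)) with (2*(L-k'-1)+1) by ring.
      apply Z.odd_odd. }
    intro C. rewrite C in H0. discriminate.
Qed.
Open Scope R_scope.

Lemma pow2_top (l z : Z) : (0 <= l)%Z -> pow2 z -> (2^l < z <= 2*2^l)%Z -> z = (2*2^l)%Z.
Proof.
  intros Hl [e ->] Hb.
  set (e' := Z.of_nat e) in *. assert (He0 : (0 <= e')%Z) by lia.
  destruct (Z.le_gt_cases e' l) as [H|H].
  - assert (2^e' <= 2^l)%Z by (apply Z.pow_le_mono_r; lia). lia.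
  - assert (H1 : (2^(l+1) <= 2^e')%Z) by (apply Z.pow_le_mono_r; lia).
    rewrite Z.pow_add_r in H1 by lia. lia.
Qed.

Lemma level_uniq (i l m : Z) : (0 <= i)%Z -> (0 <= l)%Z ->
  (2^i < m <= 2*2^i)%Z -> (2^l < m <= 2*2^l)%Z -> i = l.
Proof.
  intros Hi Hl H1 H2.
  destruct (Z.lt_total i l) as [H|[H|H]]; auto.
  - assert (H0 : (2^(i+1) <= 2^l)%Z) by (apply Z.pow_le_mono_r; lia).
    rewrite Z.pow_add_r in H0 by lia. lia.
  - assert (H0 : (2^(l+1) <= 2^i)%Z) by (apply Z.pow_le_mono_r; lia).
    rewrite Z.pow_add_r in H0 by lia. lia.
Qed.

Lemma div_le_cross a b c d : 0 < b -> 0 < d -> a / b <= c / d -> a * d <= c * b.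
Proof.
  intros Hb Hd H.
  assert (a = (a/b) * b) by (field; lra).
  assert (c = (c/d) * d) by (field; lra).
  rewrite H0, H1.
  assert ((a/b) * (b*d) <= (c/d) * (b*d)) by (apply Rmult_le_compat_r; [nra|exact H]).
  nra.
Qed.

Lemma div_lt_cross a b c d : 0 < b -> 0 < d -> c / d < a / b -> c * b < a * d.
Proof.
  intros Hb Hd H.
  assert (a = (a/b) * b) by (field; lra).
  assert (c = (c/d) * d) by (field; lra).
  rewrite H0, H1.
  assert ((c/d) * (b*d) < (a/b) * (b*d)) by (apply Rmult_lt_compat_r; [nra|exact H]).
  nra.
Qed.

Lemma zone_int (i j x y : Z) : (0 <= i)%Z -> (1 <= j)%Z -> (1 <= x)%Z -> (0 <= y)%Z ->
  in_zone i j (toR (x, y)) ->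
  (2^i < x + y <= 2*2^i)%Z /\ (j*(x+y) <= 2^i*x < (j+1)*(x+y))%Z.
Proof.
  intros Hi Hj Hx Hy (_ & _ & Hd & Hbel & Habo).
  unfold toR in *; simpl fst in *; simpl snd in *.
  rewrite Z.pow_add_r in Hd by lia. simpl (2^1)%Z in Hd.
  rewrite <- plus_IZR in Hd.
  destruct Hd as [Hd1 Hd2]. apply lt_IZR in Hd1. apply le_IZR in Hd2.
  split; [lia|].
  unfold below, vij in Hbel; simpl fst in Hbel; simpl snd in Hbel.
  destruct (Req_EM_T (IZR j) 0) as [e|_]; [apply eq_IZR in e; lia|].
  destruct Hbel as [_ Hbel].
  apply div_le_cross in Hbel; [|apply IZR_lt; lia|apply IZR_lt; lia].
  rewrite <- !mult_IZR in Hbel. apply le_IZR in Hbel.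
  unfold above, below, vij in Habo; simpl fst in Habo; simpl snd in Habo.
  destruct (Req_EM_T (IZR (j+1)) 0) as [e|_]; [apply eq_IZR in e; lia|].
  assert (Hab : ~ (IZR y / IZR x <= IZR (2 ^ i - (j + 1)) / IZR (j + 1))).
  { intro C. apply Habo. split; [apply not_0_IZR; lia| exact C]. }
  apply Rnot_le_lt in Hab.
  apply div_lt_cross in Hab; [|apply IZR_lt; lia|apply IZR_lt; lia].
  rewrite <- !mult_IZR in Hab. apply lt_IZR in Hab.
  nia.
Qed.

Lemma Mid_fst (i j : Z) (d : R) : (0 <= i)%Z ->
  fst (Mid i j d) * (2 * IZR (2^i)) = d * (2 * IZR j + 1) /\
  snd (Mid i j d) = d - fst (Mid i j d).
Proof.
  intros Hi.
  assert (HL : IZR (2^i) <> 0) by (apply not_0_IZR; pose proof (Z.pow_pos_nonneg 2 i); lia).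
  unfold Mid, inter, vij; simpl.
  rewrite !minus_IZR, !plus_IZR.
  replace (IZR j + (IZR (2^i) - IZR j)) with (IZR (2^i)) by ring.
  replace (IZR j + 1 + (IZR (2^i) - (IZR j + 1))) with (IZR (2^i)) by ring.
  split; field; auto.
Qed.

Lemma linf_down (x y : Z) (M : rpt) : snd M = IZR (x + y - 1) - fst M ->
  linf (toR (pdown (x, y))) M = Rabs (IZR x - fst M).
Proof.
  intros H. unfold linf, toR, pdown; simpl. rewrite H.
  replace (IZR (y - 1) - (IZR (x + y - 1) - fst M)) with (- (IZR x - fst M))
    by (rewrite !minus_IZR, plus_IZR; ring).
  rewrite Rabs_Ropp. apply Rmax_left. lra.
Qed.

Lemma linf_left (x y : Z) (M : rpt) : snd M = IZR (x + y - 1) - fst M ->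
  linf (toR (pleft (x, y))) M = Rabs (IZR (x - 1) - fst M).
Proof.
  intros H. unfold linf, toR, pleft; simpl. rewrite H.
  replace (IZR y - (IZR (x + y - 1) - fst M)) with (- (IZR (x - 1) - fst M))
    by (rewrite !minus_IZR, plus_IZR; ring).
  rewrite Rabs_Ropp. apply Rmax_left. lra.
Qed.

Lemma choice_int (i j x y : Z) : (0 <= i)%Z ->
  let M := Mid i j (IZR (Ddiag (x, y) - 1)) in
  (linf (toR (pdown (x,y))) M <= linf (toR (pleft (x,y))) M ->
     (2*2^i*x - (x+y-1)*(2*j+1) <= 2^i)%Z) /\
  (linf (toR (pleft (x,y))) M <= linf (toR (pdown (x,y))) M ->
     (2*2^i*x - (x+y-1)*(2*j+1) >= 2^i)%Z).
Proof.
  intros Hi M.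
  change (Ddiag (x,y)) with (x+y)%Z in M.
  destruct (Mid_fst i j (IZR (x+y - 1)) Hi) as [H1 H2].
  fold M in H1, H2.
  rewrite (linf_down x y M H2), (linf_left x y M H2).
  assert (HL : 0 < IZR (2^i)) by (apply IZR_lt; apply Z.pow_pos_nonneg; lia).
  rewrite minus_IZR.
  set (a := fst M) in *. set (L := IZR (2^i)) in *.
  assert (HE : IZR (2*2^i*x - (x+y-1)*(2*j+1)) = 2*L*IZR x - 2 * L * a).
  { rewrite ?minus_IZR, ?plus_IZR, ?mult_IZR, ?minus_IZR, ?plus_IZR. fold L.
    simpl (IZR 2). rewrite mult_IZR in *. rewrite minus_IZR, plus_IZR in H1. simpl (IZR 2) in *. lra. }
  split; intro H.
  - assert (IZR x - a <= 1/2).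
    { revert H. unfold Rabs; destruct Rcase_abs; destruct Rcase_abs; lra. }
    apply le_IZR. rewrite HE. fold L. nra.
  - assert (IZR x - a >= 1/2).
    { revert H. unfold Rabs; destruct Rcase_abs; destruct Rcase_abs; lra. }
    apply Z.le_ge. apply le_IZR. rewrite HE. fold L. nra.
Qed.
Definition Good (P Q : Z) (v : pt) : Prop :=
  (0 <= fst v /\ 0 <= snd v /\ fst v + snd v <= P + Q /\
  2 * Z.abs ((P+Q)*fst v - (fst v + snd v)*P) < 3*(P+Q) /\
  ((fst v <= 1 \/ snd v <= 1) \/
   exists l k, ZI P (P+Q) l k (fst v) (snd v) /\ 1 <= k <= 2^l - 2))%Z.

Lemma pow2_pow (l : Z) : (0 <= l)%Z -> pow2 (2^l).
Proof. intros. exists (Z.to_nat l). rewrite Z2Nat.id; auto. Qed.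

Lemma pow2_double (l : Z) : (1 <= l)%Z -> (2^l = 2 * 2^(l-1))%Z.
Proof. intros. replace l with (l-1+1)%Z at 1 by lia. rewrite Z.pow_add_r by lia. lia. Qed.

Open Scope Z_scope.

Lemma mulpos a b : 0 < a -> 0 < a * b -> 0 < b.
Proof. intros. destruct (Z_lt_le_dec 0 b); auto. assert (a * b <= 0) by (apply Z.mul_nonneg_nonpos; lia). lia. Qed.

Lemma GoodA P Q x y : 0 <= x -> 0 <= y -> x + y <= P + Q ->
  2 * Z.abs ((P+Q)*x - (x + y)*P) < 3*(P+Q) -> (x <= 1 \/ y <= 1) -> Good P Q (x, y).
Proof. intros. unfold Good; cbn [fst snd]. tauto. Qed.

Lemma GoodZ P Q x y l k : 0 <= x -> 0 <= y -> x + y <= P + Q -> 0 < P + Q -> 0 <= P <= P + Q ->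
  ZI P (P+Q) l k x y -> 1 <= k <= 2^l - 2 -> Good P Q (x, y).
Proof.
  intros. pose proof (ZI_bound P (P+Q) l k x y ltac:(lia) ltac:(lia) ltac:(lia) ltac:(lia) H4).
  unfold Good; cbn [fst snd]. repeat split; try lia. right. exists l, k. auto.
Qed.

Lemma after_trans P Q l x' y' : 0 <= P -> 0 <= Q -> 0 < P + Q -> 1 <= l ->
  x' + y' = 2^l -> Z.odd x' = true -> 0 <= x' -> 0 <= y' -> x' + y' <= P + Q ->
  (x'-1)*(P+Q) <= 2^l*P < (x'+1)*(P+Q) -> Good P Q (x', y').
Proof.
  intros HP HQ Hn Hl Hm Hodd Hx Hy Hmn Hs.
  apply Z.odd_spec in Hodd. destruct Hodd as [k' Hk'].
  assert (HZ : ZI P (P+Q) (l-1) k' x' y') by (apply ZI_trans; auto; lia).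
  pose proof (ZI_bound P (P+Q) (l-1) k' x' y' Hn ltac:(lia) Hx Hy HZ).
  pose proof (pow2_double l Hl).
  unfold Good; cbn [fst snd]. repeat split; try lia.
  destruct (Z_le_gt_dec 1 k'); [destruct (Z_le_gt_dec k' (2^(l-1) - 2))|].
  - right. exists (l-1), k'. split; [exact HZ | lia].
  - left. right. lia.
  - left. left. lia.
Qed.

Lemma xk l k x y : 0 < 2^l -> 1 <= k <= 2^l - 2 -> x + y = 2^l + 1 ->
  k*(x+y) <= 2^l*x < (k+1)*(x+y) -> x = k + 1.
Proof.
  intros HL Hk Hm Hz. rewrite Hm in Hz.
  assert (0 < 2^l * (x - k)) by lia.
  assert (0 < 2^l * (k + 2 - x)) by lia.
  apply mulpos in H; [|lia]. apply mulpos in H0; [|lia]. lia.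
Qed.

Lemma Good_step P Q v q : 0 <= P -> 0 <= Q -> 0 < P + Q ->
  Good P Q v -> v <> origin -> valid_parent v q -> Good P Q q.
Proof.
  intros HP HQ Hn HG Hv (H1 & H2 & H3 & H4 & H5).
  destruct v as (x, y). unfold Good in HG; cbn [fst snd] in HG.
  destruct HG as (Hx & Hy & Hmn & Hb & [[Hx1|Hy1]|(l & k & HZ & Hk)]).
  - destruct (Z.eq_dec x 1); [destruct (Z.eq_dec y 0)|].
    + subst. rewrite H2; [| intros [_ C]; apply C; reflexivity | unfold case2; simpl; lia].
      unfold pleft; cbn [fst snd]. apply GoodA; lia.
    + rewrite H1 by (split; [simpl; lia| intro C; inversion C; lia]).
      unfold pdown; cbn [fst snd].
      assert (1 <= y) by lia. subst x.
      apply GoodA; try lia; nia.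
    + assert (x = 0) by lia. subst x.
      assert (1 <= y) by (destruct (Z.eq_dec y 0); [subst; exfalso; apply Hv; reflexivity| lia]).
      rewrite H1 by (split; [simpl; lia| intro C; inversion C]).
      unfold pdown; cbn [fst snd].
      apply GoodA; try lia; nia.
  - destruct (Z_le_gt_dec x 1).
    +
      destruct (Z.eq_dec x 1); [destruct (Z.eq_dec y 0)|].
      * subst. rewrite H2; [| intros [_ C]; apply C; reflexivity | unfold case2; simpl; lia].
        unfold pleft; cbn [fst snd]. apply GoodA; lia.
      * rewrite H1 by (split; [simpl; lia| intro C; inversion C; lia]).
        unfold pdown; cbn [fst snd].
        assert (1 <= y) by lia. subst x.
        apply GoodA; try lia; nia.
      * assert (x = 0) by lia. subst x.
        assert (1 <= y) by (destruct (Z.eq_dec y 0); [subst; exfalso; apply Hv; reflexivity| lia]).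
        rewrite H1 by (split; [simpl; lia| intro C; inversion C]).
        unfold pdown; cbn [fst snd].
        apply GoodA; try lia; nia.
    + rewrite H2 by (unfold case1, case2; simpl; lia).
      unfold pleft; cbn [fst snd].
      assert (Q*x >= Q) by nia.
      apply GoodA; try lia.
      assert (y = 0 \/ y = 1) as [->| ->] by lia; nia.
  - pose proof HZ as HZ'. destruct HZ' as (Hl & Hm & Hs & Hk0 & Hb' & H2L).
    pose proof (ZI_zone P (P+Q) l k x y Hn ltac:(lia) Hx Hy HZ) as Hzone.
    assert (HL : 0 < 2^l) by (apply Z.pow_pos_nonneg; lia).
    assert (Hx2 : 2 <= x).
    { assert (0 < 2^l * (x - 1)).
      { assert ((k-1)*(x+y) >= 0) by (apply Z.le_ge, Z.mul_nonneg_nonneg; lia). lia. }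
      apply mulpos in H; lia. }
    assert (Hy2 : 2 <= y).
    { assert (0 < 2^l * (y - 1)).
      { assert ((2^l - 2 - k)*(x+y) >= 0) by (apply Z.le_ge, Z.mul_nonneg_nonneg; lia). lia. }
      apply mulpos in H; lia. }
    assert (nc1 : ~ case1 (x, y)) by (unfold case1; cbn [fst snd]; lia).
    assert (nc2 : ~ case2 (x, y)) by (unfold case2; cbn [fst snd]; lia).
    assert (nc3 : ~ case3 (x, y)).
    { unfold case3, Ddiag; cbn [fst snd]. intros [Hy3 Hp].
      apply pow2_top with (l := l) in Hp; [|lia|lia]. apply H2L; auto. }
    assert (Hl1 : 1 <= l).
    { destruct (Z.eq_dec l 0); [subst; simpl in Hk; lia | lia]. }
    destruct (Z.eq_dec (x+y) (2^l + 1)) as [Heq|Hne].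
    + assert (c4 : case4 (x, y)).
      { unfold case4, Ddiag; cbn [fst snd]. replace (x + y - 1) with (2^l) by lia.
        apply pow2_pow; lia. }
      destruct (H4 nc1 nc2 nc3 c4) as [[Hq|Hq] Hodd]; subst q;
        unfold pdown, pleft in *; cbn [fst snd] in *.
      * assert (x = k + 1) by (apply (xk l k x y); lia).
        apply after_trans with (l := l); try lia; auto.
      * assert (x = k + 1) by (apply (xk l k x y); lia).
        apply after_trans with (l := l); try lia; auto.
    + assert (nc4 : ~ case4 (x, y)).
      { unfold case4, Ddiag; cbn [fst snd]. intro Hp.
        apply pow2_top with (l := l) in Hp; lia. }
      destruct (H5 nc1 nc2 nc3 nc4) as (i & j & Hi & Hj & Hiz & Hch).
      destruct (zone_int i j x y ltac:(lia) ltac:(lia) ltac:(lia) ltac:(lia) Hiz) as [Hlev Hzj].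
      assert (i = l) by (apply (level_uniq i l (x+y)); lia). subst i.
      assert (j = k).
      { assert (Ha : 0 < (x+y) * (k + 1 - j)) by lia. assert (Hb2 : 0 < (x+y) * (j + 1 - k)) by lia.
        apply (mulpos (x+y)) in Ha; [|lia]. apply (mulpos (x+y)) in Hb2; [|lia]. lia. }
      subst j.
      destruct (choice_int l k x y Hl) as [Cd Cl].
      destruct Hch as [[Hq Hc]|[Hq Hc]]; subst q; unfold pdown, pleft in *; cbn [fst snd] in *.
      * apply Cd in Hc.
        assert (ZI P (P+Q) l k x (y-1)) by (apply (ZI_step P (P+Q) l k x y); try lia; auto).
        apply GoodZ with l k; auto; lia.
      * apply Cl in Hc.
        assert (ZI P (P+Q) l k (x-1) y) by (apply (ZI_step P (P+Q) l k x y); try lia; auto).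
        apply GoodZ with l k; auto; lia.
Qed.

Lemma Good_start P Q q : 0 <= P -> 0 <= Q -> (P, Q) <> origin ->
  valid_parent (P, Q) q -> Good P Q (P, Q) \/ Good P Q q.
Proof.
  intros HP HQ Hv (H1 & H2 & H3 & H4 & H5).
  assert (Hn : 0 < P + Q) by (destruct (Z.eq_dec (P+Q) 0); [exfalso; apply Hv; unfold origin; f_equal; lia | lia]).
  assert (Hb0 : 2 * Z.abs ((P+Q)*P - (P+Q)*P) < 3*(P+Q)) by (rewrite Z.sub_diag, Z.abs_0; lia).
  destruct (Z_le_gt_dec P 1); [left; apply GoodA; lia|].
  destruct (Z_le_gt_dec Q 1); [left; apply GoodA; lia|].
  assert (nc1 : ~ case1 (P, Q)) by (unfold case1; cbn [fst snd]; lia).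
  assert (nc2 : ~ case2 (P, Q)) by (unfold case2; cbn [fst snd]; lia).
  destruct (classic (case3 (P, Q))) as [c3|nc3].
  { right. rewrite (H3 nc1 nc2 c3). unfold case3 in c3; cbn [fst snd] in c3. destruct c3 as [HQ2 _].
    unfold pdown; cbn [fst snd]. subst Q. apply GoodA; lia. }
  destruct (classic (case4 (P, Q))) as [c4|nc4].
  { right. destruct (H4 nc1 nc2 nc3 c4) as [Hq Hodd].
    unfold case4, Ddiag in c4; cbn [fst snd] in c4. destruct c4 as [e He].
    set (l := Z.of_nat e) in *.
    assert (Hl : 2 <= l).
    { destruct (Z_le_gt_dec 2 l); auto.
      assert (l = 0 \/ l = 1) as [E|E] by lia; rewrite E in He; simpl in He; lia. }
    destruct Hq as [-> | ->]; unfold pdown, pleft in *; cbn [fst snd] in *;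
      apply after_trans with (l := l); try lia; auto; rewrite <- He; nia. }
  destruct (H5 nc1 nc2 nc3 nc4) as (i & j & Hi & Hj & Hiz & _).
  destruct (zone_int i j P Q ltac:(lia) ltac:(lia) ltac:(lia) ltac:(lia) Hiz) as [Hlev Hzj].
  left. apply GoodZ with i j; try lia.
  unfold ZI. repeat split; try lia.
  intros Hm HQ2. apply nc3. unfold case3, Ddiag; cbn [fst snd]. split; auto.
    rewrite Hm. replace (2 * 2^i) with (2^(i+1)) by (rewrite Z.pow_add_r; lia).
    apply pow2_pow; lia.
Qed.

Lemma final_dist P Q x y : 0 <= P -> 0 <= Q -> 0 < P + Q -> 0 <= x -> 0 <= y ->
  x + y <= P + Q -> 2 * Z.abs ((P+Q)*x - (x+y)*P) < 3*(P+Q) ->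
  dist_seg_lt (x, y) (P, Q) (3/2).
Proof.
  intros HP HQ Hn Hx Hy Hmn Hb.
  assert (Hb1 : -3*(P+Q) < 2*((P+Q)*x - (x+y)*P) < 3*(P+Q)) by lia.
  destruct Hb1 as [Hl Hr]. apply IZR_lt in Hl. apply IZR_lt in Hr.
  rewrite ?mult_IZR, ?minus_IZR, ?plus_IZR, ?opp_IZR, ?mult_IZR in Hl, Hr.
  assert (HnR : (0 < IZR P + IZR Q)%R) by (rewrite <- plus_IZR; apply IZR_lt; lia).
  assert (HmR : (IZR x + IZR y <= IZR P + IZR Q)%R) by (rewrite <- !plus_IZR; apply IZR_le; lia).
  assert (0 <= IZR x)%R by (apply IZR_le; lia).
  assert (0 <= IZR y)%R by (apply IZR_le; lia).
  exists ((IZR x + IZR y) / (IZR P + IZR Q))%R.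
  set (n := (IZR P + IZR Q)%R) in *. set (t := ((IZR x + IZR y) / n)%R).
  assert (Ht : (t * n = IZR x + IZR y)%R) by (unfold t; field; lra).
  split.
  - split.
    + unfold t, Rdiv. apply Rmult_le_pos; [lra| apply Rlt_le, Rinv_0_lt_compat; lra].
    + apply (Rmult_le_reg_r n); [lra|]. rewrite Ht. lra.
  - unfold linf, toR; cbn [fst snd].
    set (z := (IZR x - t * IZR P)%R).
    replace (IZR y - t * IZR Q)%R with (- z)%R
      by (unfold z; replace (IZR y) with (t * n - IZR x)%R by lra; unfold n; ring).
    rewrite Rabs_Ropp, Rmax_left by lra.
    assert (Hz : (z * n = n * IZR x - (IZR x + IZR y) * IZR P)%R)
      by (unfold z; replace ((IZR x + IZR y) * IZR P)%R with (t * n * IZR P)%R by (rewrite Ht; ring); ring).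
    simpl (IZR 2) in *. simpl (IZR 3) in *.
    rewrite !plus_IZR in Hl, Hr. fold n in Hl, Hr.
    apply Rabs_def1; nra.
Qed.

Close Scope Z_scope.
Open Scope R_scope.

Theorem lemma3 (par : pt -> pt)
  (Hpar : forall p : pt, inQ1 p -> p <> origin -> valid_parent p (par p)) :
  forall p : pt, inQ1 p ->
  forall v : pt, in_R par p v -> dist_seg_lt v p (3 / 2).
Proof.
  Local Open Scope Z_scope.
  intros [P Q] [HP HQ] v [k [Hv Hk]]. cbn [fst snd] in HP, HQ.
  destruct (classic ((P, Q) = origin)) as [Ho|Ho].
  - destruct k as [|k'].
    + simpl in Hv. subst v. rewrite Ho. exists 0%R. split; [lra|].
      unfold linf, toR, origin; cbn [fst snd]. rewrite !Rmult_0_l, !Rminus_0_r, Rabs_R0, Rmax_left; lra.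
    + exfalso. apply (Hk 0%nat); [lia| exact Ho].
  - assert (Hn : 0 < P + Q) by (destruct (Z.eq_dec (P+Q) 0); [exfalso; apply Ho; unfold origin; f_equal; lia | lia]).
    assert (Hiter : forall k w, Good P Q w -> (forall j, (j < k)%nat -> Nat.iter j par w <> origin) ->
              Good P Q (Nat.iter k par w)).
    { induction k0 as [|k0 IH]; intros w Hw Hj; [exact Hw|].
      rewrite Nat.iter_succ.
      assert (HG : Good P Q (Nat.iter k0 par w)) by (apply IH; auto).
      assert (Hne : Nat.iter k0 par w <> origin) by (apply Hj; lia).
      apply (Good_step P Q (Nat.iter k0 par w)); auto.
      apply Hpar; auto. destruct HG as (G1 & G2 & _). split; auto. }
    assert (Hfin : forall w, Good P Q w -> dist_seg_lt w (P, Q) (3/2)).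
    { intros [x y] (G1 & G2 & G3 & G4 & _). cbn [fst snd] in *. apply final_dist; auto. }
    destruct (Good_start P Q (par (P, Q)) HP HQ Ho (Hpar (P, Q) (conj HP HQ) Ho)) as [G|G].
    + subst v. apply Hfin. apply Hiter; auto.
    + destruct k as [|k'].
      * simpl in Hv. subst v. apply final_dist; try lia.
      * subst v. rewrite Nat.iter_succ_r. apply Hfin. apply Hiter; auto.
        intros j Hj. rewrite <- Nat.iter_succ_r. apply Hk. lia.
Qed.
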